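(* Let $k$ and $\ell$ be positive integers with $k\ge 3$. Then there exists a positive integer $N_2$ such that $px_{k,\ell}(K_{n,n})=2$ for every integer $n\ge N_2$.
   Context: All graphs are finite, simple and undirected; $K_{n,n}$ is the complete bipartite graph with both parts of size $n$. An edge-coloring of a graph may assign the same color to adjacent edges. A tree $T$ in an edge-colored graph is a proper tree if no two adjacent edges of $T$ receive the same color. For $S\subseteq V(G)$ with $|S|\ge 2$, an $S$-tree is a tree in $G$ containing all vertices of $S$. $S$-trees $T_1,\dots,T_\ell$ are internally disjoint if $E(T_i)\cap E(T_j)=\emptyset$ and $V(T_i)\cap V(T_j)=S$ for all $i\ne j$. For a connected graph $G$ of order $n$ and integers $k,\ell$ with $2\le k\le n$ and $1\le \ell\le \kappa_k(G)$ (where $\kappa_k(G)$ is the minimum, over all $k$-subsets $S$ of $V(G)$, of the maximum number of internally disjoint $S$-trees), the $(k,\ell)$-proper index $px_{k,\ell}(G)$ is the minimum number of colors in an edge-coloring of $G$ such that for every $k$-subset $S$ of $V(G)$ there exist $\ell$ internally disjoint proper $S$-trees. *)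

(* Defs.v *)
From mathcomp Require Import all_boot.
Set Implicit Arguments. Unset Strict Implicit. Unset Printing Implicit Defensive.

(* Edges are represented as 2-element
   vertex sets [set x; y]; an edge-coloring with c colors is any function
   {set T} -> 'I_c (its values on non-edges are irrelevant). *)

Section Graphs.
Variables (T : finType) (adj : rel T).

Definition simple_graph := symmetric adj /\ irreflexive adj.

Definition gedges : {set {set T}} :=
  [set e : {set T} | [exists x, exists y, adj x y && (e == [set x; y])]].

Definition connected_graph : Prop := forall x y : T, connect adj x y.

Definition subgraph (V : {set T}) (E : {set {set T}}) : Prop :=
  E \subset gedges /\ forall e, e \in E -> e \subset V.

Definition eadj (E : {set {set T}}) : rel T := fun x y => [set x; y] \in E.

Definition sub_connected (V : {set T}) (E : {set {set T}}) : Prop :=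
  forall x y, x \in V -> y \in V -> connect (eadj E) x y.

Definition sub_acyclic (E : {set {set T}}) : Prop :=
  forall p : seq T, uniq p -> 3 <= size p -> ~~ cycle (eadj E) p.

Definition is_tree (V : {set T}) (E : {set {set T}}) : Prop :=
  subgraph V E /\ V != set0 /\ sub_connected V E /\ sub_acyclic E.

Definition proper_sub (c : nat) (col : {set T} -> 'I_c) (E : {set {set T}}) : Prop :=
  forall e1 e2, e1 \in E -> e2 \in E -> e1 != e2 -> e1 :&: e2 != set0 ->
    col e1 != col e2.

Definition S_tree (S V : {set T}) (E : {set {set T}}) : Prop :=
  is_tree V E /\ S \subset V.

Definition int_disjoint (S : {set T}) (l : nat)
  (F : 'I_l -> {set T} * {set {set T}}) : Prop :=
  (forall i, S_tree S (F i).1 (F i).2) /\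
  (forall i j, i != j -> (F i).2 :&: (F j).2 = set0 /\ (F i).1 :&: (F j).1 = S).

Definition kappa_ge (k l : nat) : Prop :=
  forall S : {set T}, #|S| = k -> exists F : 'I_l -> {set T} * {set {set T}},
    int_disjoint S F.

Definition px_good (k l c : nat) : Prop :=
  exists col : {set T} -> 'I_c,
    forall S : {set T}, #|S| = k ->
      exists F : 'I_l -> {set T} * {set {set T}},
        int_disjoint S F /\ forall i, proper_sub col (F i).2.

(* px_{k,l}(G) = p : the parameter is defined (G connected, 2 <= k <= |V|,
   1 <= l <= kappa_k(G)) and p is the minimum number of colors of a good coloring *)
Definition px_is (k l p : nat) : Prop :=
  [/\ connected_graph, 2 <= k <= #|T|, 1 <= l, kappa_ge k l &
      px_good k l p /\ forall q, px_good k l q -> p <= q].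

End Graphs.

Definition Knn_adj (n : nat) : rel ('I_n + 'I_n)%type :=
  fun x y => match x, y with
             | inl _, inr _ | inr _, inl _ => true
             | _, _ => false
             end.
Arguments Knn_adj n : clear implicits.

(* Main.v *)
Require Import Defs.
From mathcomp Require Import all_boot zify.
Set Implicit Arguments. Unset Strict Implicit. Unset Printing Implicit Defensive.

Section Gen.
Variables (T : finType) (f : nat -> T) (L : nat).

Definition PV : {set T} := [set f (val t) | t : 'I_L].
Definition PE : {set {set T}} := [set [set f (val t); f (val t).+1] | t : 'I_L.-1].

Lemma PVP v : reflect (exists2 t, t < L & v = f t) (v \in PV).
Proof.
apply: (iffP imsetP) => [[t _ ->]|[t ht ->]]; first by exists (val t) => //; apply: ltn_ord.
by exists (Ordinal ht).
Qed.

Lemma PEP e : reflect (exists2 t, t.+1 < L & e = [set f t; f t.+1]) (e \in PE).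
Proof.
apply: (iffP imsetP) => [[t _ ->]|[t ht ->]].
  by exists (val t) => //; case: t => /= t; lia.
have ht' : t < L.-1 by lia.
by exists (Ordinal ht').
Qed.

Lemma set2_eq (a b c d : T) : [set a; b] = [set c; d] ->
  (a = c /\ b = d) \/ (a = d /\ b = c).
Proof.
move=> E.
have ha : a \in [set c; d] by rewrite -E set21.
have hb : b \in [set c; d] by rewrite -E set22.
have hc : c \in [set a; b] by rewrite E set21.
have hd : d \in [set a; b] by rewrite E set22.
move: ha hb hc hd => /set2P[]-> /set2P[]-> /set2P[] h1 /set2P[] h2; subst; auto.
Qed.

Hypothesis finj : forall s t, s < L -> t < L -> f s = f t -> s = t.

Lemma eadjP a b : eadj PE a b -> exists2 t, t.+1 < L &
  (a = f t /\ b = f t.+1) \/ (a = f t.+1 /\ b = f t).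
Proof. by move=> /PEP[t ht /set2_eq H]; exists t. Qed.

Lemma eadj_sym : symmetric (eadj PE).
Proof. by move=> x y; rewrite /eadj setUC. Qed.

Lemma path_connected : 0 < L -> sub_connected PV PE.
Proof.
move=> L0.
have h0 : forall t, t < L -> connect (eadj PE) (f 0) (f t).
  elim=> [|t IH] ht; first exact: connect0.
  apply: connect_trans (IH (ltnW ht)) (connect1 _).
  by apply/PEP; exists t.
move=> x y /PVP[s hs ->] /PVP[t ht ->].
apply: connect_trans (h0 t ht).
by rewrite (sym_connect_sym eadj_sym); apply: h0.
Qed.

Lemma path_acyclic : sub_acyclic PE.
Proof.
move=> p up sp; apply/negP => cp.
case: p up sp cp => [|x0 p0] // up sp cp.
have ex : exists m, (m < L) && (f m \in x0 :: p0).
  move: cp; rewrite /= rcons_path => /andP[_ /eadjP[t ht [[_ E]|[_ E]]]].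
    by exists t.+1; rewrite ht -E mem_head.
  by exists t; rewrite (ltnW ht) -E mem_head.
case: (ex_minnP ex) => m /andP[mL mp] mmin.
have minp : forall s, s < L -> f s \in x0 :: p0 -> m <= s.
  by move=> s sL sp'; apply: mmin; rewrite sL.
case: (rot_to mp) => i q hq.
have uq : uniq (f m :: q) by rewrite -hq rot_uniq.
have sq : 3 <= size (f m :: q) by rewrite -hq size_rot.
have cq : cycle (eadj PE) (f m :: q) by rewrite -hq rot_cycle.
have memq : forall y, y \in q -> y \in x0 :: p0.
  by move=> y yq; rewrite -(mem_rot i) hq inE yq orbT.
have nb : forall y, y \in q -> eadj PE (f m) y -> y = f m.+1.
  move=> y yq /eadjP[t ht [[h1 h2]|[h1 h2]]].
    by have := finj mL (ltnW ht) h1 => ?; subst.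
  have := finj mL ht h1 => ?; subst.
  have := minp t (ltnW ht) (memq _ yq); lia.
case: q hq uq sq cq memq nb => [|y r] // hq uq sq cq memq nb.
case: r hq uq sq cq memq nb => [|z r] // hq uq sq cq memq nb.
move: cq; rewrite /= rcons_path => /and4P[e1 _ _ e2].
have hy := nb y (mem_head _ _) e1.
have hl : last z r \in y :: z :: r by rewrite inE mem_last orbT.
have hl' : last z r \in z :: r by exact: mem_last.
rewrite eadj_sym in e2.
have := nb (last z r) hl e2; rewrite -hy => hz.
move: uq; rewrite /= -hz => /and3P[_ /negP H _]; apply: H.
exact: hl'.
Qed.

Lemma path_tree (adj : rel T) : 0 < L ->
  (forall t, t.+1 < L -> adj (f t) (f t.+1)) -> is_tree adj PV PE.
Proof.
move=> L0 hadj; split; last split; last split.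
- split.
    apply/subsetP => e /PEP[t ht ->]; rewrite inE.
    by apply/existsP; exists (f t); apply/existsP; exists (f t.+1); rewrite hadj ?eqxx.
  move=> e /PEP[t ht ->]; apply/subsetP => v /set2P[]->; apply/PVP.
    by exists t => //; lia.
  by exists t.+1.
- by apply/set0Pn; exists (f 0); apply/PVP; exists 0.
- exact: path_connected.
- exact: path_acyclic.
Qed.

Lemma path_proper c (col : {set T} -> 'I_c) :
  (forall t, t.+2 < L -> col [set f t; f t.+1] != col [set f t.+1; f t.+2]) ->
  Defs.proper_sub col PE.
Proof.
move=> hc e1 e2 /PEP[s hs ->] /PEP[t ht ->] ne /set0Pn[v].
rewrite inE => /andP[/set2P hv1 /set2P hv2].
have key : (s.+1 = t) \/ (t.+1 = s).
  case: hv1 hv2 => -> [] /finj H.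
  - have E : s = t by apply: H; lia.
    by move: ne; rewrite E eqxx.
  - by right; symmetry; apply: H; lia.
  - by left; apply: H; lia.
  - have E : s = t by apply/eq_add_S; apply: H; lia.
    by move: ne; rewrite E eqxx.
case: key => E; subst.
  exact: hc.
by rewrite eq_sym; apply: hc.
Qed.
End Gen.

Lemma divmod_inj d q q' r r' : r < d -> r' < d -> q*d + r = q'*d + r' -> q = q' /\ r = r'.
Proof.
move=> hr hr' E.
have d0 : 0 < d by lia.
have := congr1 (fun x => x %/ d) E; rewrite /= !divnMDl // !divn_small // !addn0 => Eq.
by subst; split => //; lia.
Qed.

Section Constr.
Variable m : nat.
Definition VT := ('I_m.+1 + 'I_m.+1)%type.

Definition w (x : VT) : nat := match x with inl i => val i | inr j => val j end.
Definition sideb (x : VT) : bool := if x is inr _ then true else false.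
Definition mk (sd : bool) (i : nat) : VT := if sd then inr (inord i) else inl (inord i).
Definition slot (x : VT) : nat := sideb x + (odd (w x)).*2.
Definition colK (e : {set VT}) : 'I_2 := inord (odd (\sum_(x in e) w x)).

Lemma w_mk sd i : i <= m -> w (mk sd i) = i.
Proof. by move=> hi; case: sd => /=; rewrite inordK. Qed.
Lemma side_mk sd i : sideb (mk sd i) = sd.
Proof. by case: sd. Qed.
Lemma mk_inj sd sd' i i' : i <= m -> i' <= m -> mk sd i = mk sd' i' -> sd = sd' /\ i = i'.
Proof.
move=> hi hi' E; split; first by rewrite -(side_mk sd i) E side_mk.
by rewrite -(w_mk sd hi) E w_mk.
Qed.

Lemma adj_side a b : Knn_adj m.+1 a b = (sideb a != sideb b).
Proof. by case: a; case: b. Qed.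

Lemma colK2 a b : a != b -> colK [set a; b] = inord (odd (w a + w b)).
Proof.
move=> ab; rewrite /colK big_setU1 ?big_set1 //=.
by rewrite inE.
Qed.

Lemma colK_ne a b c : a != b -> b != c -> odd (w a) != odd (w c) ->
  colK [set a; b] != colK [set b; c].
Proof.
move=> ab bc hac; rewrite !colK2 //; apply/eqP => /(congr1 val).
rewrite /= !inordK; try by case: (odd _).
rewrite !oddD; move: hac.
by case: (odd (w a)); case: (odd (w b)); case: (odd (w c)).
Qed.

Variables (k : nat) (S : {set VT}).
Hypothesis hS : #|S| = k.

Definition cand sd pr q (r : 'I_k.+1) : VT := mk sd ((q * k.+1 + r).*2 + pr).
Definition fresh sd (pr : bool) q : VT :=
  cand sd pr q (odflt ord0 [pick r : 'I_k.+1 | cand sd pr q r \notin S]).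

Lemma fresh_spec sd (pr : bool) q : (q * k.+1 + k).*2 + 1 <= m ->
  fresh sd pr q \notin S /\ exists2 r, r <= k & w (fresh sd pr q) = (q * k.+1 + r).*2 + pr
  /\ sideb (fresh sd pr q) = sd.
Proof.
move=> hq; rewrite /fresh; case: pickP => [r /= hr|none].
  split => //; exists r; first by have := ltn_ord r; lia.
  rewrite /cand side_mk w_mk //; have := ltn_ord r; case: pr {hr} => /=; lia.
exfalso.
have sub : [set cand sd pr q r | r : 'I_k.+1] \subset S.
  by apply/subsetP => v /imsetP[r _ ->]; by have := none r => /= /negbFE.
have := subset_leq_card sub; rewrite card_imset ?card_ord ?hS; first lia.
move=> r r' E.
have hr := ltn_ord r; have hr' := ltn_ord r'.
have h1 : (q * k.+1 + r).*2 + pr <= m by case: pr {E none sub} => /=; lia.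
have h2 : (q * k.+1 + r').*2 + pr <= m by case: pr {E none sub h1} => /=; lia.
have [_ E'] := mk_inj h1 h2 E.
apply: val_inj; move: E'; clear -pr; case: pr => /=; lia.
Qed.


Variable l : nat.
Hypothesis hm : ((8*k*l) * k.+1 + k).*2 + 1 <= m.

Definition sv a := nth (inl ord0) (enum S) a.
Definition spos t := (t %/ 8 < k) && (t %% 8 == slot (sv (t %/ 8))).
Definition xv i t := if spos t then sv (t %/ 8) else fresh (odd t) (odd t./2) (i * (8*k) + t).

Lemma sv_in a : a < k -> sv a \in S.
Proof. by move=> ha; rewrite /sv -mem_enum mem_nth // -cardE hS. Qed.

Lemma sv_inj a b : a < k -> b < k -> sv a = sv b -> a = b.
Proof.
move=> ha hb E; apply/eqP.
have sz : size (enum S) = k by rewrite -cardE hS.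
rewrite -(nth_uniq (inl ord0) _ _ (enum_uniq (mem S))) ?sz //.
by apply/eqP.
Qed.

Lemma slot_lt x : slot x < 4.
Proof. by rewrite /slot; case: (sideb x); case: (odd _). Qed.

Lemma qbound i t : i < l -> t < 8 * k -> ((i * (8*k) + t) * k.+1 + k).*2 + 1 <= m.
Proof. move=> hi ht; move: hm; rewrite -!muln2; nia. Qed.

Lemma fresh_x i t : i < l -> t < 8 * k -> ~~ spos t ->
  [/\ xv i t \notin S, sideb (xv i t) = odd t, odd (w (xv i t)) = odd t./2 &
   exists2 r, r <= k & w (xv i t) = ((i * (8*k) + t) * k.+1 + r).*2 + odd t./2].
Proof.
move=> hi ht hs; rewrite /xv (negbTE hs).
have [H1 [r hr [H2 H3]]] := fresh_spec (odd t) (odd t./2) (qbound hi ht).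
split => //; last by exists r.
by rewrite H2 oddD odd_double oddb.
Qed.

Lemma spos_x i t : spos t ->
  sideb (xv i t) = odd t /\ odd (w (xv i t)) = odd t./2.
Proof.
rewrite /xv => hs; rewrite hs; move: hs => /andP[_ /eqP hs].
set s := sv (t %/ 8).
have E : t = sideb s + (odd (w s) + 4 * (t %/ 8)).*2.
  by move: hs; rewrite /slot -/s => hs; have := divn_eq t 8; rewrite hs -!muln2; lia.
rewrite E half_bit_double !oddD odd_double !oddb addbF.
by case: (odd (t %/ 8)); rewrite ?addbF.
Qed.

Lemma x_type i t : i < l -> t < 8 * k ->
  sideb (xv i t) = odd t /\ odd (w (xv i t)) = odd t./2.
Proof.
move=> hi ht; case hs: (spos t); first exact: spos_x.
by have [] := fresh_x hi ht (negbT hs).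
Qed.

Lemma x_inS i t : i < l -> t < 8 * k -> xv i t \in S -> spos t.
Proof.
move=> hi ht; apply: contraTT => hs.
by have [] := fresh_x hi ht hs.
Qed.

Lemma xeq i j t u : i < l -> j < l -> t < 8 * k -> u < 8 * k -> xv i t = xv j u ->
  t = u /\ (i = j \/ xv i t \in S).
Proof.
move=> hi hj ht hu E.
case ht': (spos t); case hu': (spos u).
- move: E; rewrite /xv ht' hu' => E.
  move: ht' hu' => /andP[ha /eqP sa] /andP[hb /eqP sb].
  have ab := sv_inj ha hb E.
  split; last by right; apply: sv_in.
  rewrite (divn_eq t 8) (divn_eq u 8) sa sb ab; done.
- exfalso; have [H1 _ _ _] := fresh_x hj hu (negbT hu').
  by move: H1; rewrite -E /xv ht' sv_in //; case/andP: ht'.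
- exfalso; have [H1 _ _ _] := fresh_x hi ht (negbT ht').
  by move: H1; rewrite E /xv hu' sv_in //; case/andP: hu'.
- have [_ s1 p1 [r1 hr1 w1]] := fresh_x hi ht (negbT ht').
  have [_ s2 p2 [r2 hr2 w2]] := fresh_x hj hu (negbT hu').
  have ep : odd t./2 = odd u./2 by rewrite -p1 -p2 E.
  have := congr1 w E; rewrite w1 w2 ep => /eqP; rewrite eqn_add2r -!muln2 eqn_mul2r /= => /eqP.
  move=> /divmod_inj [] //; try lia.
  move=> /divmod_inj [] //; try lia.
Qed.


Hypothesis hk : 0 < k.

Lemma finj (i : 'I_l) s t : s < 8 * k -> t < 8 * k -> xv i s = xv i t -> s = t.
Proof. by move=> hs ht /(xeq (ltn_ord i) (ltn_ord i) hs ht) []. Qed.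

Lemma side_ne i t : i < l -> t.+1 < 8 * k -> xv i t != xv i t.+1.
Proof.
move=> hi ht; apply/eqP => E.
have [s1 _] := x_type hi (ltnW ht); have [s2 _] := x_type hi ht.
by move: s1 s2; rewrite E => -> /=; case: (odd t).
Qed.

Lemma S_sub (i : 'I_l) : S \subset PV (xv i) (8 * k).
Proof.
apply/subsetP => s sS; apply/PVP.
have sz : size (enum S) = k by rewrite -cardE hS.
have ha : index s (enum S) < k by rewrite -sz index_mem mem_enum.
have hsl := slot_lt s.
set a := index s (enum S) in ha.
have svs : sv a = s by rewrite /sv nth_index // mem_enum.
have d8 : (8 * a + slot s) %/ 8 = a by lia.
have m8 : (8 * a + slot s) %% 8 = slot s by lia.
exists (8 * a + slot s); first by lia.
by rewrite /xv /spos d8 m8 svs ha eqxx.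
Qed.

Definition Ftree (i : 'I_l) : {set VT} * {set {set VT}} :=
  (PV (xv i) (8*k), PE (xv i) (8*k)).

Lemma good : exists F : 'I_l -> {set VT} * {set {set VT}},
  int_disjoint (Knn_adj m.+1) S F /\ forall i, Defs.proper_sub colK (F i).2.
Proof.
exists Ftree; split; first split.
- move=> i; split; last exact: S_sub.
  apply: path_tree; first exact: finj.
    by lia.
  move=> t ht; rewrite adj_side.
  have [s1 _] := x_type (ltn_ord i) (ltnW ht); have [s2 _] := x_type (ltn_ord i) ht.
  by rewrite s1 s2 /=; case: (odd t).
- move=> i j ij; split.
    apply/setP => e; rewrite !inE; apply/negP => /andP[/PEP[t ht Et] /PEP[u hu Eu]].
    have : (xv i t \notin S) || (xv i t.+1 \notin S).
      rewrite -negb_and; apply/negP => /andP[/(x_inS (ltn_ord i) (ltnW ht)) h1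
                                       /(x_inS (ltn_ord i) ht) h2].
      move: h1 h2 => /andP[_ /eqP h1] /andP[_ /eqP h2].
      have := slot_lt (sv (t %/ 8)); rewrite -h1 => h3.
      have d8 : t.+1 %/ 8 = t %/ 8 by lia.
      move: h2; rewrite d8 -h1; lia.
    have key : forall v, v \notin S -> v \in e -> (exists2 t', t' < 8 * k & v = xv i t') -> False.
      move=> v vS; rewrite Eu => /set2P hv [t' ht' Ev].
      have [u' hu' Eu'] : exists2 u', u' < 8 * k & v = xv j u'.
        by case: hv => ->; [exists u => //; lia | exists u.+1].
      have [_ []] := xeq (ltn_ord i) (ltn_ord j) ht' hu' (etrans (esym Ev) Eu').
        by move/val_inj => E; move: ij; rewrite E eqxx.
      by rewrite -Ev (negbTE vS).
    case/orP => hv.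
      by apply: (key _ hv); [rewrite Et set21 | exists t => //; lia].
    by apply: (key _ hv); [rewrite Et set22 | exists t.+1].
  apply/setP => v; rewrite inE; apply/idP/idP.
    case/andP => /PVP[t ht ->] /PVP[u hu Eu].
    have [_ []] := xeq (ltn_ord i) (ltn_ord j) ht hu Eu => //.
    by move/val_inj => E; move: ij; rewrite E eqxx.
  by move=> vS; rewrite (subsetP (S_sub i)) ?(subsetP (S_sub j)).
- move=> i; apply: path_proper; first exact: finj.
  move=> t ht; apply: colK_ne.
  + by apply: side_ne => //; lia.
  + exact: side_ne.
  + have [_ p1] := x_type (ltn_ord i) (ltnW (ltnW ht)).
    have [_ p2] := x_type (ltn_ord i) ht.
    rewrite p1 p2; have -> : t.+2./2 = (t./2).+1 by [].
    by rewrite oddS; case: (odd _).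
Qed.

End Constr.

Lemma no_col1 (T : finType) (adj : rel T) (col : {set T} -> 'I_1) (S V : {set T}) (E : {set {set T}}) :
  3 <= #|S| -> S_tree adj S V E -> Defs.proper_sub col E -> False.
Proof.
move=> h3 [[_ [_ [conn _]]] sV] hp.
have hp' : forall e1 e2, e1 \in E -> e2 \in E -> e1 != e2 -> e1 :&: e2 != set0 -> False.
  by move=> e1 e2 h1 h2 ne ni; have := hp e1 e2 h1 h2 ne ni; rewrite (ord1 (col e1)) (ord1 (col e2)) eqxx.
have match_ : forall p x, path (eadj E) x p -> last x p = x \/ [set x; last x p] \in E.
  elim=> [|y p IH] x //=; first by left.
  move=> /andP[exy /IH [->|hyl]]; first by right.
  case: (eqVneq [set x; y] [set y; last y p]) => [E2|ne].
    have : last y p \in [set x; y] by rewrite E2 set22.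
    by case/set2P => ->; [left | right].
  exfalso; apply: (hp' _ _ exy hyl ne); apply/set0Pn; exists y.
  by rewrite inE set22 set21.
have reach : forall a b, a \in S -> b \in S -> a != b -> [set a; b] \in E.
  move=> a b aS bS ab.
  have /connectP[p pth Eb] := conn a b (subsetP sV a aS) (subsetP sV b bS).
  rewrite Eb; case: (match_ p a pth) => // E1; by move: ab; rewrite Eb E1 eqxx.
have uq := enum_uniq (mem S).
have sz : 3 <= size (enum S) by rewrite -cardE.
case Ee: (enum S) uq sz => [|a [|b [|c r]]] //= uq _.
have aS : a \in S by rewrite -mem_enum Ee mem_head.
have bS : b \in S by rewrite -mem_enum Ee !inE eqxx orbT.
have cS : c \in S by rewrite -mem_enum Ee !inE eqxx !orbT.
move: uq; rewrite !inE => /and4P[/norP[ab /norP[ac _]] /norP[bc _] _ _].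
apply: (hp' _ _ (reach a b aS bS ab) (reach a c aS cS ac)).
  apply/eqP => E2; have : b \in [set a; c] by rewrite -E2 set22.
  by case/set2P => E3; [move: ab | move: bc]; rewrite E3 eqxx.
by apply/set0Pn; exists a; rewrite inE !set21.
Qed.

Lemma Knn_conn n : connected_graph (Knn_adj n).
Proof.
move=> x y.
have step : forall i j, connect (Knn_adj n) (inl i) (inr j) by move=> i j; exact: connect1.
have step' : forall i j, connect (Knn_adj n) (inr i) (inl j) by move=> i j; exact: connect1.
case: x => i; case: y => j.
- exact: connect_trans (step i i) (step' i j).
- exact: step.
- exact: step'.
- exact: connect_trans (step' i i) (step i j).
Qed.

Lemma exists_ksub (T : finType) k : k <= #|T| -> exists S : {set T}, #|S| = k.
Proof.
move=> hk; exists [set x in take k (enum T)].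
rewrite cardsE; have /card_uniqP -> := take_uniq k (enum_uniq (mem T)).
by rewrite size_takel // -cardE.
Qed.

Theorem theorem3p1 (k l : nat) :
  3 <= k -> 0 < l ->
  exists N2 : nat, 0 < N2 /\
    forall n : nat, N2 <= n -> px_is (Knn_adj n) k l 2.
Proof.
move=> k3 l0.
exists (((8*k*l) * k.+1 + k).*2 + 2); split; first by lia.
move=> [|m] hn; first by exfalso; lia.
have hm : ((8*k*l) * k.+1 + k).*2 + 1 <= m by lia.
have hkm : k <= m by move: hm; rewrite -!muln2; nia.
have hk0 : 0 < k by lia.
have goodp : px_good (Knn_adj m.+1) k l 2.
  exists (@colK m) => S hS; exact: (good hS hm hk0).
have hT : #|{: 'I_m.+1 + 'I_m.+1}| = m.+1 + m.+1 by rewrite card_sum card_ord.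
split => //.
- exact: Knn_conn.
- by rewrite hT; apply/andP; split; lia.
- move=> S hS; have [F [H _]] := good hS hm hk0; by exists F.
- split => // q [col Hc].
  case: q col Hc => [|[|q]] // col Hc; first by case: (col set0).
  have [S hS] : exists S : {set 'I_m.+1 + 'I_m.+1}, #|S| = k.
    by apply: exists_ksub; rewrite hT; lia.
  have [F [[HF _] HP]] := Hc S hS.
  exfalso; apply: (no_col1 (_ : 3 <= #|S|) (HF (Ordinal l0)) (HP (Ordinal l0))).
  by rewrite hS.
Qed.
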